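(* Let $g\geq 1$. For any algebra morphism (representation) $\mathbb{Z}[\mathbb{H}_g]\to M_d(\mathbb{C})$, there exist integers $N,k\geq 1$ such that $(\sigma^{2N}-1)^k$ lies in its kernel. In particular $\mathbb{Z}[\mathbb{H}_g]$ admits no faithful finite-dimensional complex representation.
   Context: $\mathbb{H}_g$ is the Heisenberg group with presentation $\langle a_1,b_1,\dots,a_g,b_g,\sigma \mid [a_i,a_j],[b_i,b_j],[\sigma,a_i],[\sigma,b_i],[a_i,b_j]\sigma^{-2\delta_{ij}}\rangle$, where $\delta_{ij}$ is the Kronecker symbol. *)

(* Defs.v *)
From HB Require Import structures.
From mathcomp Require Import all_boot all_order all_algebra all_field.
Set Implicit Arguments. Unset Strict Implicit. Unset Printing Implicit Defensive.
Import Order.TTheory GRing.Theory Num.Theory.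
Local Open Scope ring_scope.

(* Integer power of a matrix (meaningful for invertible matrices). *)
Definition mxzpow (d : nat) (M : 'M[algC]_d) (z : int) : 'M[algC]_d :=
  match z with
  | Posz n => M ^+ n
  | Negz n => invmx M ^+ n.+1
  end.

Definition mxcomm (d : nat) (X Y : 'M[algC]_d) : 'M[algC]_d :=
  X * Y * invmx X * invmx Y.

(* A representation of Z[H_g] in M_d(C), i.e. a unital ring morphism
   Z[H_g] -> M_d(C), is the same as a group homomorphism H_g -> GL_d(C)
   (universal property of the group ring), i.e. (universal property of the
   presentation) invertible images A i, B i, S of the generators a_i, b_i,
   sigma satisfying the defining relations of H_g. *)
Definition heis_rep (g d : nat) (A B : 'I_g -> 'M[algC]_d) (S : 'M[algC]_d)
  : Prop :=
  [/\ (forall i, A i \in unitmx), (forall i, B i \in unitmx) & S \in unitmx]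
  /\ [/\ (forall i j, mxcomm (A i) (A j) = 1),
      (forall i j, mxcomm (B i) (B j) = 1),
      (forall i, mxcomm S (A i) = 1),
      (forall i, mxcomm S (B i) = 1)
    & (forall i j, mxcomm (A i) (B j) * mxzpow S (- (2 * (i == j)%:Z)) = 1)].

(* Elements of H_g in normal form a^x b^y sigma^z
   (x, y in Z^g, z in Z); every element of H_g is uniquely of this form,
   so these index the standard Z-basis of Z[H_g]. *)
Definition heis_elt (g : nat) : Type :=
  ({ffun 'I_g -> int} * {ffun 'I_g -> int} * int)%type.

Definition heis_img (g d : nat) (A B : 'I_g -> 'M[algC]_d) (S : 'M[algC]_d)
  (h : heis_elt g) : 'M[algC]_d :=
  (\prod_(i < g) mxzpow (A i) (h.1.1 i)) *
  (\prod_(i < g) mxzpow (B i) (h.1.2 i)) * mxzpow S h.2.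

(* The linear extension of the representation is not injective on Z[H_g]:
   some nonzero element sum_{h in s} c h * h (s duplicate-free) of Z[H_g]
   is mapped to 0. *)
Definition not_faithful (g d : nat) (A B : 'I_g -> 'M[algC]_d)
  (S : 'M[algC]_d) : Prop :=
  exists (s : seq (heis_elt g)) (c : heis_elt g -> int),
    [/\ uniq s, has (fun h => c h != 0) s
      & \sum_(h <- s) (c h)%:~R *: heis_img A B S h = 0].

(* Main.v *)
Require Import Defs.
From HB Require Import structures.
From mathcomp Require Import all_boot all_order all_algebra all_field.
Import Order.TTheory GRing.Theory Num.Theory.
Local Open Scope ring_scope.

Lemma key (n : nat) (a b T : 'M[algC]_n.+1) (l : algC) :
  a \in unitmx -> b \in unitmx -> a * T = T * a -> b * T = T * b ->
  a * b = T * b * a -> root (char_poly T) l -> l ^+ (n.+1)`! = 1.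
Proof.
move=> ua ub aT bT rel rl.
have ev : eigenvalue T l by rewrite eigenvalue_root_char.
set W := eigenspace T l.
set V := row_base W.
have rfV : row_free V := row_base_free W.
have stW : forall x : 'M_n.+1, x * T = T * x -> stablemx V x.
  move=> x xT; rewrite stablemx_row_base; apply: comm_mx_stable_eigenspace.
  by rewrite /comm_mx !mulmxE xT.
have sa := stW a aT; have sb := stW b bT; have sT := stW T erefl.
have sai : stablemx V (invmx a).
  apply: stW; apply/esym; apply: (@commrV _ T a); exact/esym.
have sbi : stablemx V (invmx b).
  apply: stW; apply/esym; apply: (@commrV _ T b); exact/esym.
have cT : conjmx V T = l%:M.
  have VT : V *m T = V *m l%:M.
    rewrite mul_mx_scalar; apply/eigenspaceP; rewrite (eq_row_base W); exact: submx_refl.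
  by rewrite /conjmx VT -/(conjmx V l%:M) conjmx_scalar.
have unit_c : forall x, stablemx V x -> stablemx V (invmx x) -> x \in unitmx ->
    \det (conjmx V x) \is a GRing.unit.
  move=> x sx sxi ux.
  have : conjmx V x *m conjmx V (invmx x) = 1%:M.
    by rewrite -conjmxM ?inE // mulmxV // conjmx_scalar.
  move=> /(congr1 determinant); rewrite det_mulmx det1 => h.
  by apply/unitrP; exists (\det (conjmx V (invmx x))); rewrite h mulrC h.
have sTb : stablemx V (T *m b).
  apply: stW; change ((T * b) * T = T * (T * b)); by rewrite -mulrA bT mulrA.
have := congr1 (fun x => \det (conjmx V x)) rel => /=.
rewrite -!mulmxE (conjmxM (V:=V)) ?inE // (conjmxM (V:=V) (x:=T *m b)) ?inE //.
rewrite (conjmxM (V:=V) (x:=T)) ?inE // cT !det_mulmx det_scalar.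
have ua' := unit_c a sa sai ua; have ub' := unit_c b sb sbi ub.
move=> h.
have hr : l ^+ \rank W = 1.
  apply: (mulIr ua'); apply: (mulIr ub'); rewrite mul1r h.
  by rewrite -!mulrA [\det (conjmx V a) * _]mulrC.
have r0 : (0 < \rank W)%N by rewrite lt0n mxrank_eq0.
have rn : (\rank W <= n.+1)%N by apply: rank_leq_col.
have /dvdnP [q ->] := dvdn_fact (introT andP (conj r0 rn)).
by rewrite mulnC exprM hr expr1n.
Qed.

Lemma nilp (n M : nat) (T : 'M[algC]_n.+1) :
  (forall l, root (char_poly T) l -> l ^+ M = 1) -> (T ^+ M - 1) ^+ n.+1 = 0.
Proof.
move=> H.
have [rs Hrs] := closed_field_poly_normal (char_poly T).
rewrite (monicP (char_poly_monic T)) scale1r in Hrs.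
have srs : size rs = n.+1.
  by apply/eqP; rewrite -eqSS -(size_prod_XsubC rs id) -Hrs size_char_poly.
have hd : forall s : seq algC, all (fun z => root (char_poly T) z) s ->
    \prod_(z <- s) ('X - z%:P) %| ('X^M - 1) ^+ size s.
  elim=> [|z s IH] /=; first by rewrite big_nil dvd1p.
  move=> /andP [rz rs']; rewrite big_cons exprS dvdp_mul ?IH //.
  by rewrite dvdp_XsubCl /root !hornerE H ?subrr.
have /dvdpP [q Hq] : char_poly T %| ('X^M - 1) ^+ n.+1.
  rewrite Hrs -srs; apply: hd; apply/allP => z zin.
  by rewrite Hrs root_prod_XsubC.
have := congr1 (horner_mx T) Hq.
rewrite rmorphM /= Cayley_Hamilton mulr0 rmorphXn rmorphB /= rmorphXn /= horner_mx_X rmorph1.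
by [].
Qed.
Lemma horner_mx_sum n (S : 'M[algC]_n.+1) (q : {poly algC}) :
  horner_mx S q = \sum_(i < size q) q`_i *: S ^+ i.
Proof.
rewrite -{1}[q]coefK poly_def rmorph_sum /=; apply: eq_bigr => i _.
by rewrite linearZ /= rmorphXn /= horner_mx_X.
Qed.

Lemma nf g n (A B : 'I_g -> 'M[algC]_n.+1) S N k : (0 < N)%N ->
  (S ^+ (2 * N) - 1) ^+ k = 0 -> not_faithful A B S.
Proof.
move=> N0 H.
pose P : {poly int} := ('X^(2 * N) - 1) ^+ k.
pose Q : {poly algC} := map_poly intr P.
have HQ : Q = ('X^(2 * N) - 1) ^+ k.
  by rewrite /Q /P rmorphXn rmorphB /= rmorph1 map_polyXn.
have Q0 : Q`_0 != 0.
  have e0 : (0 : algC) ^+ (2 * N) = 0 by rewrite expr0n; move: N0; clear; case: N.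
  by rewrite -horner_coef0 HQ !hornerE e0 add0r signr_eq0.
have sQ : (0 < size Q)%N.
  by rewrite lt0n size_poly_eq0; apply: contraNneq Q0 => ->; rewrite coef0.
pose f0 : {ffun 'I_g -> int} := [ffun => 0].
pose s : seq (heis_elt g) := [seq ((f0, f0), Posz i) | i <- index_iota 0 (size Q)].
exists s, (fun h => P`_(absz h.2)); split.
- rewrite map_inj_uniq ?iota_uniq // => i j [].
  by move=> ->.
- apply/hasP; exists ((f0, f0), Posz 0).
    by apply/mapP; exists 0%N; rewrite ?mem_index_iota.
  rewrite /=; apply: contraNneq Q0 => h0.
  by rewrite /Q coef_map /= h0.
transitivity (horner_mx S Q).
  rewrite horner_mx_sum big_map big_mkord; apply: eq_bigr => i _.
  rewrite /heis_img /= !big1 ?mul1r; last 2 first.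
  - by move=> j _; rewrite ffunE.
  - by move=> j _; rewrite ffunE.
  by rewrite /Q coef_map.
by rewrite HQ rmorphXn rmorphB /= rmorphXn /= horner_mx_X rmorph1.
Qed.

Lemma comm_of n (x y : 'M[algC]_n.+1) : x \in unitmx -> y \in unitmx ->
  mxcomm x y = 1 -> x * y = y * x.
Proof.
move=> ux uy; rewrite /mxcomm => h.
change (x * y / x / y = 1) in h.
have := congr1 (fun z => z * y * x) h.
by rewrite mul1r divrK // divrK.
Qed.

Theorem mainTheorem4 (g d : nat) (A B : 'I_g -> 'M[algC]_d) (S : 'M[algC]_d) :
  (1 <= g)%N -> heis_rep A B S ->
  (exists N k : nat, [/\ (1 <= N)%N, (1 <= k)%N &
      (S ^+ (2 * N) - 1) ^+ k = 0])
  /\ not_faithful A B S.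
Proof.
case: d A B S => [|n] A B S g1 [[uA uB uS] [cAA cBB cSA cSB cAB]].
  split; first by exists 1%N, 1%N; split => //; apply: flatmx0.
  pose h0 : heis_elt g := (([ffun => 0], [ffun => 0]), 0).
  exists [:: h0], (fun _ => 1); split => //; exact: flatmx0.
pose i0 : 'I_g := Ordinal g1.
pose a := A i0; pose b := B i0; pose T := S ^+ 2.
have Sa : S * a = a * S by apply: comm_of; [done | exact: uA | exact: cSA].
have Sb : S * b = b * S by apply: comm_of; [done | exact: uB | exact: cSB].
have aT : a * T = T * a by rewrite /T expr2 mulrA -Sa -mulrA -Sa mulrA.
have bT : b * T = T * b by rewrite /T expr2 mulrA -Sb -mulrA -Sb mulrA.
have hab := cAB i0 i0; rewrite eqxx in hab.
change (a * b / a / b * (S^-1) ^+ 2 = 1) in hab.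
have hab' : a * b / a / b = T.
  have := congr1 (fun z => z * T) hab; rewrite mul1r -mulrA.
  by rewrite /T exprVn mulVr ?mulr1 // unitrX.
have rel : a * b = T * b * a.
  by rewrite -hab' (divrK (uB i0)) (divrK (uA i0)).
have HM : forall l, root (char_poly T) l -> l ^+ (n.+1)`! = 1.
  by move=> l; apply: (key _ _ _ _ _ (uA i0) (uB i0) aT bT rel).
have HN := nilp _ _ _ HM.
rewrite /T -exprM in HN.
split; first by exists (n.+1)`!, n.+1; split => //; apply: fact_gt0.
exact: (nf _ _ A B _ _ _ (fact_gt0 n.+1) HN).
Qed.
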